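(* Consider a game in which Constructor and Blocker alternately claim unclaimed edges of $K_n$, and suppose that at some moment, with Constructor to move, there are five vertices $v_1,\dots,v_5$ that are isolated in Constructor's graph and such that no edge between two of them has been claimed by Blocker. Assume Constructor is allowed to claim edges among $v_1,\dots,v_5$ forming a triangle with a pendant leg (i.e. this subgraph is not forbidden to her). Then, whatever Blocker does, Constructor can within her next four moves build a triangle with a pendant leg on vertices among $v_1,\dots,v_5$.
   Context: A triangle with a pendant leg is a triangle together with one additional edge joining one of its vertices to a fourth vertex. Constructor's graph is the graph of edges claimed by Constructor. *)

(* Defs.v *)
From mathcomp Require Import all_boot.
Set Implicit Arguments. Unset Strict Implicit. Unset Printing Implicit Defensive.

(* Vertices of K_n are 'I_n; an edge is a 2-element subset of 'I_n;
   a graph (set of claimed edges) is a {set {set 'I_n}}. *)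

Definition is_edge n (e : {set 'I_n}) : bool := #|e| == 2.

Definition unclaimed n (C B : {set {set 'I_n}}) (e : {set 'I_n}) : bool :=
  [&& is_edge e, e \notin C & e \notin B].

Definition paw_on n (v : 'I_5 -> 'I_n) (C : {set {set 'I_n}}) : Prop :=
  exists a b c d : 'I_5,
    [/\ uniq [:: a; b; c; d],
        [set v a; v b] \in C, [set v b; v c] \in C,
        [set v c; v a] \in C & [set v c; v d] \in C].

Definition blocker_move n (C B B' : {set {set 'I_n}}) : Prop :=
  (exists e, unclaimed C B e /\ B' = e |: B) \/
  ((forall e, ~~ unclaimed C B e) /\ B' = B).

(* Constructor may only claim an unclaimed edge e whose addition keeps her
   graph admissible ([ok], e.g. free of the forbidden graph). *)
Fixpoint cwin n (ok : {set {set 'I_n}} -> bool) (v : 'I_5 -> 'I_n)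
    (k : nat) (C B : {set {set 'I_n}}) : Prop :=
  match k with
  | 0 => paw_on v C
  | k'.+1 =>
      paw_on v C \/
      exists e, [/\ unclaimed C B e, ok (e |: C) &
        (paw_on v (e |: C) \/
         forall B', blocker_move (e |: C) B B' -> cwin ok v k' (e |: C) B')]
  end.

(* Main.v *)
Require Import Defs.
From mathcomp Require Import all_boot.
Set Implicit Arguments. Unset Strict Implicit. Unset Printing Implicit Defensive.
Definition kedges : seq (nat*nat) :=
  [:: (0,1);(0,2);(0,3);(0,4);(1,2);(1,3);(1,4);(2,3);(2,4);(3,4)].
Definition normp (p : nat*nat) := if p.1 < p.2 then p else (p.2, p.1).
Definition quads : seq (nat*nat*nat*nat) :=
  [seq q <- flatten (map (fun a => flatten (map (fun b => flatten (map (fun c => map (fun d => (a,b,c,d)) (iota 0 5)) (iota 0 5))) (iota 0 5))) (iota 0 5))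
   | let: (a,b,c,d) := q in uniq [:: a; b; c; d]].
Definition pawp (q : nat*nat*nat*nat) :=
  let: (a,b,c,d) := q in [:: normp (a,b); normp (b,c); normp (c,a); normp (c,d)].
Fixpoint lhas {T} (f : T -> bool) s := if s is x :: s' then (if f x then true else lhas f s') else false.
Fixpoint lall {T} (f : T -> bool) s := if s is x :: s' then (if f x then lall f s' else false) else true.
Definition pawA (X : seq (nat*nat)) := lhas (fun q => lall (fun r => r \in X) (pawp q)) quads.
Definition okA (X : seq (nat*nat)) := lhas (fun q => lall (fun r => r \in pawp q) X) quads.
Definition bstep (g : seq (nat*nat) -> bool) (X Y : seq (nat*nat)) :=
  if g Y then lall (fun f => if f \in X then true else if f \in Y then true else g (f::Y)) kedges else false.
Definition cstep (g : seq (nat*nat) -> seq (nat*nat) -> bool) (X Y : seq (nat*nat)) (p : nat*nat) :=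
  if p \in X then false else if p \in Y then false else if okA (p::X) then
    (if pawA (p::X) then true else bstep (g (p::X)) (p::X) Y) else false.
Fixpoint awin k (X Y : seq (nat*nat)) := match k with 0 => pawA X | k'.+1 =>
  if pawA X then true else lhas (cstep (awin k') X Y) kedges end.
Lemma awin4 : awin 4 [::] [::]. Proof. vm_compute. reflexivity. Qed.

Lemma lhasE {T} (f : T -> bool) s : lhas f s = has f s.
Proof. by elim: s => //= x s ->; case: (f x). Qed.
Lemma lallE {T} (f : T -> bool) s : lall f s = all f s.
Proof. by elim: s => //= x s ->; case: (f x). Qed.

Lemma kedges_ok : all (fun p : nat * nat => (p.1 < p.2) && (p.2 < 5)) kedges.
Proof. by vm_compute. Qed.
Lemma kedges_inj : all (fun p : nat*nat => all (fun q : nat*nat =>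
  ((p.1 \in [:: q.1; q.2]) && (p.2 \in [:: q.1; q.2])) ==> (p == q)) kedges) kedges.
Proof. by vm_compute. Qed.
Lemma quads_ok : all (fun q : nat*nat*nat*nat => let: (a,b,c,d) := q in
   [&& a < 5, b < 5, c < 5, d < 5 & uniq [:: a; b; c; d]]) quads.
Proof. by vm_compute. Qed.

Definition img n (v : 'I_5 -> 'I_n) (p : nat * nat) : {set 'I_n} :=
  [set v (inord p.1); v (inord p.2)].
Definition imgS n (v : 'I_5 -> 'I_n) (X : seq (nat*nat)) : {set {set 'I_n}} :=
  foldr (fun p S => img v p |: S) set0 X.

Lemma inord_eq (i j : nat) : i < 5 -> j < 5 -> (inord i == inord j :> 'I_5) = (i == j).
Proof.
move=> hi hj; apply/eqP/eqP => [/(congr1 val) /=|->//].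
by rewrite !inordK.
Qed.

Lemma mem_img n (v : 'I_5 -> 'I_n) i q : injective v -> i < 5 -> q.1 < 5 -> q.2 < 5 ->
  (v (inord i) \in img v q) = (i \in [:: q.1; q.2]).
Proof. by move=> vi hi h1 h2; rewrite !inE !(inj_eq vi) !inord_eq. Qed.

Lemma img_inj n (v : 'I_5 -> 'I_n) p q : injective v -> p \in kedges -> q \in kedges ->
  img v p = img v q -> p = q.
Proof.
move=> vi pE qE e.
have /andP[hp1 hp2] := allP kedges_ok p pE.
have /andP[hq1 hq2] := allP kedges_ok q qE.
have m1 : v (inord p.1) \in img v q by rewrite -e !inE eqxx.
have m2 : v (inord p.2) \in img v q by rewrite -e !inE eqxx orbT.
have hp0 := ltn_trans hp1 hp2; have hq0 := ltn_trans hq1 hq2.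
rewrite mem_img // in m1; rewrite mem_img // in m2.
have := allP (allP kedges_inj p pE) q qE.
by rewrite m1 m2 /= => /eqP.
Qed.

Lemma img_norm n (v : 'I_5 -> 'I_n) a b : img v (normp (a,b)) = [set v (inord a); v (inord b)].
Proof. by rewrite /normp /=; case: ifP => _ //=; rewrite /img setUC. Qed.

Lemma card_img n (v : 'I_5 -> 'I_n) p : injective v -> p \in kedges -> #|img v p| = 2.
Proof.
move=> vi pE; have /andP[h1 h2] := allP kedges_ok p pE.
rewrite /img cards2 (inj_eq vi) inord_eq //; last exact: ltn_trans h1 h2.
by rewrite neq_ltn h1.
Qed.

Lemma mem_imgS n (v : 'I_5 -> 'I_n) e X : e \in imgS v X -> exists2 q, q \in X & e = img v q.
Proof.
elim: X => [|q X IH] /=; first by rewrite inE.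
rewrite in_setU1 => /orP[/eqP->|/IH[r rX ->]]; first by exists q; rewrite ?mem_head.
by exists r; rewrite // inE rX orbT.
Qed.

Lemma imgS_mem n (v : 'I_5 -> 'I_n) q X : q \in X -> img v q \in imgS v X.
Proof.
elim: X => [|r X IH] //=; rewrite inE in_setU1 => /orP[/eqP->|/IH->]; by rewrite ?eqxx ?orbT.
Qed.

Lemma uniq_inord (a b c d : nat) : a < 5 -> b < 5 -> c < 5 -> d < 5 ->
  uniq [:: a; b; c; d] -> uniq [:: inord a; inord b; inord c; inord d : 'I_5].
Proof. by move=> ha hb hc hd; rewrite /= !inE !inord_eq. Qed.

Lemma pawA_paw n (v : 'I_5 -> 'I_n) C0 X : pawA X -> paw_on v (C0 :|: imgS v X).
Proof.
rewrite /pawA lhasE => /hasP [[[[a b] c] d] qin]; rewrite lallE => /allP H.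
have /and5P[ha hb hc hd hu] := allP quads_ok _ qin.
have M : forall r, r \in pawp (a, b, c, d) -> img v r \in C0 :|: imgS v X.
  by move=> r /H rX; rewrite in_setU imgS_mem ?orbT.
exists (inord a), (inord b), (inord c), (inord d); split.
- exact: uniq_inord.
- by rewrite -img_norm; apply: M; rewrite !inE eqxx.
- by rewrite -img_norm; apply: M; rewrite !inE eqxx ?orbT.
- by rewrite -img_norm; apply: M; rewrite !inE eqxx ?orbT.
- by rewrite -img_norm; apply: M; rewrite !inE eqxx ?orbT.
Qed.

Lemma okA_ok n (ok : {set {set 'I_n}} -> bool) (v : 'I_5 -> 'I_n) C0 X :
  (forall a b c d : 'I_5, uniq [:: a; b; c; d] ->
     forall S : {set {set 'I_n}},
       S \subset [set [set v a; v b]; [set v b; v c];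
                      [set v c; v a]; [set v c; v d]] ->
       ok (C0 :|: S)) ->
  okA X -> ok (C0 :|: imgS v X).
Proof.
move=> hok; rewrite /okA lhasE => /hasP [[[[a b] c] d] qin]; rewrite lallE => /allP H.
have /and5P[ha hb hc hd hu] := allP quads_ok _ qin.
apply: (hok (inord a) (inord b) (inord c) (inord d)); first exact: uniq_inord.
apply/subsetP => e /mem_imgS [r /H rin ->].
move: rin; rewrite !inE => /orP[/eqP->|/orP[/eqP->|/orP[/eqP->|/eqP->]]];
  rewrite img_norm ?inE ?eqxx ?orbT //. 
Qed.

Lemma awinS k X Y : awin k.+1 X Y = if pawA X then true else lhas (cstep (awin k) X Y) kedges.
Proof. by []. Qed.

Lemma transfer n (ok : {set {set 'I_n}} -> bool) (v : 'I_5 -> 'I_n) (C0 : {set {set 'I_n}}) :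
  injective v ->
  (forall e i, e \in C0 -> v i \notin e) ->
  (forall a b c d : 'I_5, uniq [:: a; b; c; d] ->
     forall S : {set {set 'I_n}},
       S \subset [set [set v a; v b]; [set v b; v c];
                      [set v c; v a]; [set v c; v d]] ->
       ok (C0 :|: S)) ->
  forall k (X Y : seq (nat*nat)) (B : {set {set 'I_n}}), all (fun p => p \in kedges) X ->
  (forall r, r \in kedges -> img v r \in B -> r \in Y) ->
  awin k X Y -> cwin ok v k (C0 :|: imgS v X) B.
Proof.
move=> vi hC0 hok; elim=> [|k IH] X Y B hX hY; first exact: pawA_paw.
rewrite awinS; case hP: (pawA X); first by move=> _; left; exact: pawA_paw.
rewrite lhasE => /hasP [p pE]; rewrite /cstep.
case: ifP => // pX; case: ifP => // pY; case: ifP => // hokA hrest.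
right; exists (img v p); rewrite setUCA; split.
- apply/and3P; split; first by rewrite /is_edge card_img.
  + rewrite in_setU negb_or; apply/andP; split.
      by apply/negP => hin; have := hC0 _ (inord p.1) hin; rewrite !inE eqxx.
    apply/negP => /mem_imgS [q qX epq].
    have qE := allP hX q qX.
    by move: pX; rewrite (img_inj vi pE qE epq) qX.
  + by apply/negP => /(hY _ pE); rewrite pY.
- exact: (okA_ok hok hokA).
move: hrest; case: ifP => hP2; first by move=> _; left; exact: (pawA_paw v C0 hP2).
rewrite /bstep; case: ifP => // hpass; rewrite lallE => /allP hall.
have hX' : all (fun p => p \in kedges) (p :: X) by rewrite /= pE.
right => B' [[e [he ->]] | [_ ->]]; last exact: (IH _ _ _ hX' hY hpass).
case: (boolP (has (fun f => e == img v f) kedges)) => [/hasP [f fE /eqP ef] | hno].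
- have := hall f fE; case: ifP => fX.
    move: he; rewrite /unclaimed ef in_setU (imgS_mem v fX) orbT.
    by rewrite andbF.
  have inv : forall Y' : seq (nat*nat), f \in Y' -> {subset Y <= Y'} ->
     forall r, r \in kedges -> img v r \in e |: B -> r \in Y'.
    move=> Y' fY' sY r rE; rewrite in_setU1 => /orP[/eqP rf|/(hY _ rE)/sY //].
    by rewrite (img_inj vi rE fE (etrans rf ef)).
  case: ifP => fY hw.
    exact: (IH _ _ _ hX' (inv Y fY (fun x h => h)) hpass).
  apply: (IH _ _ _ hX' (inv (f :: Y) (mem_head _ _) _) hw).
  by move=> x h; rewrite inE h orbT.
- apply: (IH _ _ _ hX' _ hpass) => r rE; rewrite in_setU1 => /orP[/eqP rf|/(hY _ rE) //].
  by case/negP: hno; apply/hasP; exists r; rewrite ?rf.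
Qed.

Theorem lemma2p3 (n : nat) (ok : {set {set 'I_n}} -> bool)
  (v : 'I_5 -> 'I_n) (C B : {set {set 'I_n}}) :
  injective v ->
  (forall e, e \in C -> is_edge e) ->
  (forall e, e \in B -> is_edge e) ->
  [disjoint C & B] ->
  (forall e i, e \in C -> v i \notin e) ->
  (forall i j : 'I_5, [set v i; v j] \notin B) ->
  (forall a b c d : 'I_5, uniq [:: a; b; c; d] ->
     forall S : {set {set 'I_n}},
       S \subset [set [set v a; v b]; [set v b; v c];
                      [set v c; v a]; [set v c; v d]] ->
       ok (C :|: S)) ->
  cwin ok v 4 C B.
Proof.
move=> vi _ _ _ hC hB hok.
have eq : C :|: imgS v [::] = C by apply: setU0.
rewrite -eq; apply: (transfer vi hC hok (X := [::]) (Y := [::]) (B := B) (k := 4) isT _ awin4).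
by move=> r _ hr; move: (hB (inord r.1) (inord r.2)); rewrite hr.
Qed.
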